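(* For every $n\ge 3$, $\beta(P_\infty\,\Box\, C_n)=2$ if $n$ is odd and $\beta(P_\infty\,\Box\, C_n)=3$ if $n$ is even. Moreover, $\{(0,0),(0,\tfrac{n-1}{2})\}$ is a metric basis of $P_\infty\,\Box\, C_n$ when $n$ is odd, and $\{(0,0),(0,\tfrac n2),(0,1)\}$ is a metric basis when $n$ is even.
   Context: $P_\infty$ has vertex set $\mathbb N=\{0,1,2,\dots\}$ with $i,j$ adjacent iff $|i-j|=1$. $C_n$ has vertex set $\{0,1,\dots,n-1\}$, with $0\le i\le j\le n-1$ adjacent iff $j-i=1$ or $j-i=n-1$. The cartesian product $G\Box H$ has vertex set $V(G)\times V(H)$, where $(a,v)$ is adjacent to $(b,w)$ iff either $a=b$ and $vw\in E(H)$, or $v=w$ and $ab\in E(G)$. A vertex $x$ resolves $u,v$ if $d(u,x)\ne d(v,x)$ (shortest-path distance); a resolving set is a set of vertices resolving every pair of distinct vertices; $\beta$ is the minimum cardinality of a resolving set ($\infty$ if none is finite), and a metric basis is a resolving set of cardinality $\beta$. *)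

(* Defs.v *)
From mathcomp Require Import all_boot.
Set Implicit Arguments. Unset Strict Implicit. Unset Printing Implicit Defensive.

Inductive walk {V : Type} (adj : V -> V -> Prop) : V -> V -> nat -> Prop :=
| walk0 x : walk adj x x 0
| walkS x y z k : adj x y -> walk adj y z k -> walk adj x z k.+1.

Definition graph_dist {V : Type} (adj : V -> V -> Prop) (u v : V) (d : nat) : Prop :=
  walk adj u v d /\ forall k, walk adj u v k -> d <= k.

Definition resolves {V : Type} (adj : V -> V -> Prop) (x u v : V) : Prop :=
  exists du dv, graph_dist adj u x du /\ graph_dist adj v x dv /\ du <> dv.

Definition resolving_set {V : eqType} (adj : V -> V -> Prop) (S : seq V) : Prop :=
  forall u v : V, u <> v -> exists x, x \in S /\ resolves adj x u v.

Definition metric_basis {V : eqType} (adj : V -> V -> Prop) (B : seq V) : Prop :=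
  uniq B /\ resolving_set adj B /\
  forall S : seq V, uniq S -> resolving_set adj S -> size B <= size S.

Definition metric_dim_eq {V : eqType} (adj : V -> V -> Prop) (m : nat) : Prop :=
  exists B, metric_basis adj B /\ size B = m.

Definition adjP (i j : nat) : Prop := i.+1 = j \/ j.+1 = i.

Definition adjC (n : nat) (i j : 'I_n) : Prop :=
  let d := if (i <= j)%N then (j - i)%N else (i - j)%N in d = 1 \/ d = n - 1.

Definition box {A B : Type} (adjA : A -> A -> Prop) (adjB : B -> B -> Prop)
  (x y : A * B) : Prop :=
  (x.1 = y.1 /\ adjB x.2 y.2) \/ (x.2 = y.2 /\ adjA x.1 y.1).

Definition PinfBoxC (n : nat) : nat * 'I_n -> nat * 'I_n -> Prop := box adjP (@adjC n).

Lemma lt0_3 n : 2 < n -> 0 < n.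
Proof. by move=> h; apply: leq_trans h. Qed.
Lemma lt1_3 n : 2 < n -> 1 < n.
Proof. by move=> h; apply: ltnW. Qed.
Lemma lthalf_3 n : 2 < n -> n %/ 2 < n.
Proof. by move=> h; rewrite ltn_Pdiv // (lt0_3 h). Qed.
Lemma lthalfm1_3 n : 2 < n -> (n - 1) %/ 2 < n.
Proof. by move=> h; apply: leq_ltn_trans (leq_div _ _) _; rewrite ltn_subrL (lt0_3 h). Qed.

(* Main.v *)
Require Import Defs.
From mathcomp Require Import all_boot.
From Stdlib Require Import Lia Arith.
Ltac norm := repeat match goal with
  | H : is_true (leq _ _) |- _ => move/leP: H => H
  | H : context [addn] |- _ => rewrite -plusE in H
  | H : context [subn] |- _ => rewrite -minusE in H
  | H : context [muln] |- _ => rewrite -multE in H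
  | |- is_true (leq _ _) => apply/leP
  end; rewrite -?plusE -?minusE -?multE.
Ltac lia' := norm; lia.

Section Arith.
Local Open Scope coq_nat_scope.
Definition dC (n i j : nat) : nat :=
  Nat.min (Nat.sub i j + Nat.sub j i) (Nat.sub n (Nat.sub i j + Nat.sub j i)).
Ltac ud := unfold dC in *.
Lemma tri n a b c : a < n -> b < n -> c < n ->
  (a - b + (b - a) = 1 \/ a - b + (b - a) = n - 1) -> dC n a c <= dC n b c + 1.
Proof. intros; ud; lia'. Qed.
Lemma dC_self n i : dC n i i = 0. Proof. ud; lia'. Qed.
Lemma dC_sym n i j : dC n i j = dC n j i. Proof. ud; lia'. Qed.
Lemma dC_le n i j : 2 * dC n i j <= n. Proof. ud; lia'. Qed.

Lemma dC0a n i : i < n -> 2*i <= n -> dC n i 0 = i. Proof. intros; ud; lia'. Qed.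
Lemma dC0b n i : i < n -> n <= 2*i -> dC n i 0 = n - i. Proof. intros; ud; lia'. Qed.
Lemma dCma n m i : i < n -> i <= m -> 2*m <= n -> dC n i m = m - i. Proof. intros; ud; lia'. Qed.
Lemma dCmb n m i : i < n -> m <= i -> n <= 2*m+1 -> dC n i m = i - m. Proof. intros; ud; lia'. Qed.
Lemma dC1a n i : 2 < n -> 1 <= i -> 2*i <= n+2 -> dC n i 1 = i - 1. Proof. intros; ud; lia'. Qed.
Lemma dC1b n i : i < n -> n+2 <= 2*i -> dC n i 1 = n - i + 1. Proof. intros; ud; lia'. Qed.

Lemma odd_inj0 n m a b i j : n = 2*m+1 -> i < n -> j < n ->
  a + dC n i 0 = b + dC n j 0 -> a + dC n i m = b + dC n j m -> a = b /\ i = j.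
Proof. move=> H H0 H1 H2 H3.
 destruct (le_lt_dec i m); destruct (le_lt_dec j m).
 - rewrite (dC0a n i) ?(dC0a n j) ?(dCma n m i) ?(dCma n m j) in H2 H3; lia'.
 - rewrite (dC0a n i) ?(dC0b n j) ?(dCma n m i) ?(dCmb n m j) in H2 H3; lia'.
 - rewrite (dC0b n i) ?(dC0a n j) ?(dCmb n m i) ?(dCma n m j) in H2 H3; lia'.
 - rewrite (dC0b n i) ?(dC0b n j) ?(dCmb n m i) ?(dCmb n m j) in H2 H3; lia'.
Qed.

Lemma even_inj0 n m a b i j : n = 2*m -> 2 <= m -> i < n -> j < n ->
  a + dC n i 0 = b + dC n j 0 -> a + dC n i m = b + dC n j m ->
  a + dC n i 1 = b + dC n j 1 -> a = b /\ i = j.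
Proof. move=> H H0 H1 H2 H3 H4 H5.
 assert (E1: forall k, k < n -> dC n k 0 + dC n k m = m).
 { intros k hk; destruct (le_lt_dec k m).
   rewrite dC0a ?dCma; lia'. rewrite dC0b ?dCmb; lia'. }
 assert (a = b) by (pose proof (E1 i); pose proof (E1 j); lia'). subst b. split; auto.
 assert (Q0: dC n i 0 = dC n j 0) by lia'. assert (Q1: dC n i 1 = dC n j 1) by lia'.
 clear H3 H4 H5.
 destruct (le_lt_dec i m); destruct (le_lt_dec j m).
 - rewrite (dC0a n i) ?(dC0a n j) in Q0; lia'.
 - rewrite (dC0a n i) ?(dC0b n j) in Q0; try lia'.
   destruct i. lia'. rewrite (dC1a n (S i)) ?(dC1b n j) in Q1; lia'.
 - rewrite (dC0b n i) ?(dC0a n j) in Q0; try lia'.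
   destruct j. lia'. rewrite (dC1a n (S j)) ?(dC1b n i) in Q1; lia'.
 - rewrite (dC0b n i) ?(dC0b n j) in Q0; lia'.
Qed.
Lemma L1 n i j : i <= j -> 2*(j-i) <= n -> dC n i j = j - i. Proof. intros; ud; lia'. Qed.
Lemma L2 n i j : i <= j -> j < n -> n <= 2*(j-i) -> dC n i j = n - (j - i). Proof. intros; ud; lia'. Qed.
Lemma L3 n i j : j <= i -> 2*(i-j) <= n -> dC n i j = i - j. Proof. intros; ud; lia'. Qed.
Lemma L4 n i j : j <= i -> i < n -> n <= 2*(i-j) -> dC n i j = n - (i - j). Proof. intros; ud; lia'. Qed.
Ltac dcv n a b := first
  [ assert (dC n a b = b - a) by (apply L1; lia')
  | assert (dC n a b = n - (b - a)) by (apply L2; lia')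
  | assert (dC n a b = a - b) by (apply L3; lia')
  | assert (dC n a b = n - (a - b)) by (apply L4; lia') ].
Lemma nb_exists n i : 2 < n -> i < n -> exists p, p < n /\ dC n p i = 1.
Proof. intros. destruct (Nat.eq_dec i 0). exists 1; ud; lia'. exists (i-1); ud; lia'. Qed.
Lemma away n m i j : n = 2*m -> 2 <= m -> i < n -> j < n -> dC n i j < m ->
  exists p, p < n /\ dC n p i = 1 /\ dC n p j = dC n i j + 1.
Proof. intros. destruct (le_lt_dec i j); destruct (le_lt_dec (j - i + (i - j)) m).
 - destruct (Nat.eq_dec i 0).
   + subst i. exists (n-1). dcv n 0 j. dcv n (n-1) 0. dcv n (n-1) j. lia'.
   + exists (i-1). dcv n i j. dcv n (i-1) i. dcv n (i-1) j. lia'.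
 - exists (i+1). dcv n i j. dcv n (i+1) i. dcv n (i+1) j. lia'.
 - destruct (Nat.eq_dec i (n-1)).
   + exists 0. dcv n i j. dcv n 0 i. dcv n 0 j. lia'.
   + exists (i+1). dcv n i j. dcv n (i+1) i. dcv n (i+1) j. lia'.
 - exists (i-1). dcv n i j. dcv n (i-1) i. dcv n (i-1) j. lia'.
Qed.
Lemma antip n m i j : n = 2*m -> 2 <= m -> i < n -> j < n -> dC n i j = m ->
  exists p q, p < n /\ q < n /\ p <> q /\ dC n p i = dC n q i /\ dC n p j = dC n q j.
Proof. intros. assert (J: j = i + m \/ i = j + m) by (ud; lia'). clear H3.
 destruct J as [J|J]; (destruct (Nat.eq_dec i 0);
 [ exists 1, (n-1); dcv n 1 i; dcv n (n-1) i; dcv n 1 j; dcv n (n-1) j; lia'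
 | destruct (Nat.eq_dec i (n-1));
  [ exists 0, (i-1); dcv n 0 i; dcv n (i-1) i; dcv n 0 j; dcv n (i-1) j; lia'
  | exists (i+1), (i-1); dcv n (i+1) i; dcv n (i-1) i;
    dcv n (i+1) j; dcv n (i-1) j; lia']]).
Qed.
End Arith.

Lemma walk_app {V : Type} (adj : V -> V -> Prop) x y z k l :
  walk adj x y k -> walk adj y z l -> walk adj x z (k + l).
Proof. elim=> [//|x0 y0 z0 k0 H _ IH] Hw; rewrite addSn; exact: walkS H (IH Hw). Qed.

Lemma walk_sym {V : Type} (adj : V -> V -> Prop) (hs : forall x y, adj x y -> adj y x) x y k :
  walk adj x y k -> walk adj y x k.
Proof.
elim=> [x0|x0 y0 z0 k0 H _ IH]; first exact: walk0.
rewrite -addn1; apply: walk_app IH _; apply: walkS (hs _ _ H) (walk0 _ _).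
Qed.

Lemma walk_eq {V : Type} (adj : V -> V -> Prop) x y k l : walk adj x y k -> k = l -> walk adj x y l.
Proof. by move=> H <-. Qed.

Arguments walk_app {V adj x y z k l}.
Arguments walk_eq {V adj x y k l}.
Section G.
Variable n : nat.
Hypothesis hn : 2 < n.

Lemma adjC_iff (i j : 'I_n) :
  adjC i j <-> (Nat.add (Nat.sub i j) (Nat.sub j i) = 1 \/ Nat.add (Nat.sub i j) (Nat.sub j i) = Nat.sub n 1).
Proof.
have hi := ltn_ord i; have hj := ltn_ord j.
rewrite /adjC; case: leqP => h /=; split; case=> H; norm; lia.
Qed.

Lemma adjC_succ (i j : 'I_n) : nat_of_ord j = i.+1 -> adjC i j.
Proof. move=> H; apply/adjC_iff; rewrite H; lia'. Qed.
Lemma adjC_wrap (i j : 'I_n) : nat_of_ord i = 0 -> nat_of_ord j = n.-1 -> adjC i j.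
Proof. move=> H1 H2; apply/adjC_iff; rewrite H1 H2; lia'. Qed.

Lemma adjC_sym (i j : 'I_n) : adjC i j -> adjC j i.
Proof. rewrite !adjC_iff; lia. Qed.

Lemma adj_sym (x y : nat * 'I_n) : PinfBoxC x y -> PinfBoxC y x.
Proof.
rewrite /PinfBoxC /box /adjP; case=> [[H1 H2]|[H1 H2]].
- by left; split; [|apply: adjC_sym].
- by right; split; [|case: H2; [right|left]].
Qed.

Definition D (u v : nat * 'I_n) : nat :=
  Nat.add (Nat.add (Nat.sub u.1 v.1) (Nat.sub v.1 u.1)) (dC n u.2 v.2).

Lemma adj_D x y z : PinfBoxC x y -> (D x z <= Nat.add (D y z) 1)%coq_nat.
Proof.
case: x => a i; case: y => b j; case: z => c k.
rewrite /PinfBoxC /box /adjP /D /=; case=> [[H1 H2]|[H1 H2]].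
- subst b. move/adjC_iff: H2 => H2.
  have := @tri n i j k; have := ltn_ord i; have := ltn_ord j; have := ltn_ord k.
  move=> h1 h2 h3 T. move/leP: h1 => h1; move/leP: h2 => h2; move/leP: h3 => h3.
  have := T h3 h2 h1. norm. lia'.
- subst j. lia'.
Qed.

Lemma walk_lb x v k : walk (@PinfBoxC n) x v k -> (D x v <= k)%coq_nat.
Proof.
elim=> [[a i]|x0 y0 z0 k0 H _ IH].
- rewrite /D /= dC_self; lia.
- have := @adj_D x0 y0 z0 H; lia'.
Qed.

Lemma walkP_up k a (i : 'I_n) : walk (@PinfBoxC n) (a, i) (a + k, i) k.
Proof.
elim: k a => [|k IH] a; first by rewrite addn0; apply: walk0.
apply: (@walkS _ _ _ (a.+1, i)); first by right; split; [|left].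
by rewrite addnS -addSn; apply: IH.
Qed.

Lemma walkP a b (i : 'I_n) : walk (@PinfBoxC n) (a, i) (b, i) (Nat.add (Nat.sub a b) (Nat.sub b a)).
Proof.
case: (leqP a b) => h.
- have := walkP_up (b - a) a i; rewrite subnKC // => W; apply: walk_eq W _; lia'.
- apply: walk_sym; first exact: adj_sym.
  have := walkP_up (a - b) b i; rewrite subnKC ?(ltnW h) // => W; apply: walk_eq W _; lia'.
Qed.

Lemma walkC_up k b (i j : 'I_n) : nat_of_ord j = nat_of_ord i + k -> walk (@PinfBoxC n) (b, i) (b, j) k.
Proof.
elim: k i => [|k IH] i hij.
- rewrite addn0 in hij; have -> : j = i by apply: val_inj.
  exact: walk0.
- have hi : i.+1 < n by have hj := ltn_ord j; lia'.
  apply: (@walkS _ _ _ (b, Ordinal hi)).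
  + by left; split=> //; apply: adjC_succ.
  + apply: IH => /=; rewrite hij; lia'.
Qed.

Lemma walkC_le b (i j : 'I_n) : i <= j -> walk (@PinfBoxC n) (b, i) (b, j) (dC n i j).
Proof.
move=> hij; have hj := ltn_ord j; have hi := ltn_ord i.
case: (leqP (2 * (j - i)) n) => h.
- rewrite (L1 n i j); try lia'.
  apply: walkC_up; lia'.
- rewrite (L2 n i j); try lia'.
  have h0 : 0 < n by lia'.
  have h1 : n.-1 < n by lia'.
  have W1 : walk (@PinfBoxC n) (b, i) (b, Ordinal h0) i.
  { apply: walk_sym; first exact: adj_sym. apply: walkC_up => /=; lia'. }
  have W2 : walk (@PinfBoxC n) (b, Ordinal h0) (b, Ordinal h1) 1.
  { apply: walkS (walk0 _ _). by left; split=> //; apply: adjC_wrap. }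
  have W3 : walk (@PinfBoxC n) (b, Ordinal h1) (b, j) (n.-1 - j).
  { apply: walk_sym; first exact: adj_sym. apply: walkC_up => /=; lia'. }
  apply: walk_eq (walk_app W1 (walk_app W2 W3)) _; lia'.
Qed.

Lemma walkC b (i j : 'I_n) : walk (@PinfBoxC n) (b, i) (b, j) (dC n i j).
Proof.
case: (leqP i j) => h; first exact: walkC_le.
rewrite dC_sym; apply: walk_sym; first exact: adj_sym.
by apply: walkC_le; apply: ltnW.
Qed.

Lemma walk_D u v : walk (@PinfBoxC n) u v (D u v).
Proof.
case: u => a i; case: v => b j; rewrite /D /=.
rewrite plusE; exact: walk_app (walkP a b i) (walkC b i j).
Qed.

Lemma gdist_D u v : graph_dist (@PinfBoxC n) u v (D u v).
Proof. split; first exact: walk_D. move=> k /walk_lb h; apply/leP; exact h. Qed.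

Lemma gdist_uniq u v d : graph_dist (@PinfBoxC n) u v d -> d = D u v.
Proof.
case=> W H. have h1 := @walk_lb u v d W. have /leP h2 := H _ (walk_D u v). lia.
Qed.

Arguments gdist_uniq {u v d}.
Lemma resolves_iff x u v : resolves (@PinfBoxC n) x u v <-> D u x <> D v x.
Proof.
split.
- case=> [du [dv [H1 [H2 H3]]]]; by rewrite -(gdist_uniq H1) -(gdist_uniq H2).
- move=> H; exists (D u x), (D v x); split; [exact: gdist_D|split; [exact: gdist_D|exact H]].
Qed.

Lemma notres (S : seq (nat * 'I_n)) u v :
  u <> v -> (forall x, x \in S -> D u x = D v x) -> ~ resolving_set (@PinfBoxC n) S.
Proof.
move=> neq H R; case: (R u v neq) => x [xS /resolves_iff]; by rewrite H.
Qed.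

End G.
Lemma res_odd n (hn : 2 < n) : odd n ->
  resolving_set (@PinfBoxC n) [:: (0, Ordinal (lt0_3 hn)); (0, Ordinal (lthalfm1_3 hn))].
Proof.
move=> hodd [a i] [b j] neq.
have E := odd_double_half n; rewrite hodd /= in E.
have hm : (n - 1) %/ 2 = n./2.
  have -> : n - 1 = n./2.*2 by rewrite -addnn in E *; lia'.
  by rewrite divn2 doubleK.
case: (Nat.eq_dec (D n (a,i) (0, Ordinal (lt0_3 hn))) (D n (b,j) (0, Ordinal (lt0_3 hn)))) => e0;
  last by exists (0, Ordinal (lt0_3 hn)); split; [rewrite inE eqxx|apply/resolves_iff].
case: (Nat.eq_dec (D n (a,i) (0, Ordinal (lthalfm1_3 hn))) (D n (b,j) (0, Ordinal (lthalfm1_3 hn)))) => e1;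
  last by exists (0, Ordinal (lthalfm1_3 hn)); split; [rewrite !inE eqxx orbT|apply/resolves_iff].
exfalso; apply: neq.
rewrite /D /= hm in e0 e1.
have hi := ltn_ord i; have hj := ltn_ord j.
have [hab hij] : a = b /\ nat_of_ord i = nat_of_ord j.
  apply: (@odd_inj0 n n./2); rewrite -?addnn in E; lia'.
by rewrite hab (val_inj hij).
Qed.

Lemma res_even n (hn : 2 < n) : ~~ odd n ->
  resolving_set (@PinfBoxC n)
    [:: (0, Ordinal (lt0_3 hn)); (0, Ordinal (lthalf_3 hn)); (0, Ordinal (lt1_3 hn))].
Proof.
move=> hev [a i] [b j] neq.
have E := odd_double_half n; rewrite (negbTE hev) /= in E.
have hm : n %/ 2 = n./2 by rewrite divn2.
case: (Nat.eq_dec (D n (a,i) (0, Ordinal (lt0_3 hn))) (D n (b,j) (0, Ordinal (lt0_3 hn)))) => e0;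
  last by exists (0, Ordinal (lt0_3 hn)); split; [rewrite inE eqxx|apply/resolves_iff].
case: (Nat.eq_dec (D n (a,i) (0, Ordinal (lthalf_3 hn))) (D n (b,j) (0, Ordinal (lthalf_3 hn)))) => e1;
  last by exists (0, Ordinal (lthalf_3 hn)); split; [rewrite !inE eqxx orbT|apply/resolves_iff].
case: (Nat.eq_dec (D n (a,i) (0, Ordinal (lt1_3 hn))) (D n (b,j) (0, Ordinal (lt1_3 hn)))) => e2;
  last by exists (0, Ordinal (lt1_3 hn)); split; [rewrite !inE eqxx !orbT|apply/resolves_iff].
exfalso; apply: neq.
rewrite /D /= hm in e0 e1 e2.
have hi := ltn_ord i; have hj := ltn_ord j.
have [hab hij] : a = b /\ nat_of_ord i = nat_of_ord j.
  apply: (@even_inj0 n n./2); rewrite -?addnn in E; lia'.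
by rewrite hab (val_inj hij).
Qed.

Lemma D_pair n a (i : 'I_n) b (k : 'I_n) :
  D n (a, i) (b, k) = Nat.add (Nat.add (Nat.sub a b) (Nat.sub b a)) (dC n i k).
Proof. by []. Qed.

Lemma noresolve1 n (hn : 2 < n) (x : nat * 'I_n) :
  exists u v, u <> v /\ D n u x = D n v x.
Proof.
case: x => a i.
have hi := ltn_ord i.
have [p [hp1 hp2]] : exists p, (p < n)%coq_nat /\ dC n p i = 1.
  apply: nb_exists; lia'.
have hp : p < n by apply/ltP.
exists (a.+1, i), (a, Ordinal hp); split.
- by move/(congr1 fst) => /= /eqP; rewrite -[X in X == _]addn1 -{2}[a]addn0 eqn_add2l.
- have hp3 : dC n (Ordinal hp) i = 1 := hp2.
  rewrite !D_pair dC_self hp3; lia'.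
Qed.

Lemma noresolve2 n (hn : 2 < n) (hev : ~~ odd n) (x y : nat * 'I_n) :
  exists u v, u <> v /\ D n u x = D n v x /\ D n u y = D n v y.
Proof.
have E := odd_double_half n; rewrite (negbTE hev) /= -addnn in E.
case: x => a i; case: y => b j.
have hi := ltn_ord i; have hj := ltn_ord j.
have hle := dC_le n i j.
case: (Nat.eq_dec (dC n i j) n./2) => hd.
- have [p [q [hp [hq [hpq [h1 h2]]]]]] := @antip n n./2 i j ltac:(lia') ltac:(lia') ltac:(lia') ltac:(lia') hd.
  have hp' : p < n by apply/ltP.
  have hq' : q < n by apply/ltP.
  exists (0, Ordinal hp'), (0, Ordinal hq'); split.
  + by move/(congr1 (fun z => nat_of_ord z.2)) => /=.
  + have h1' : dC n (Ordinal hp') i = dC n (Ordinal hq') i := h1.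
    have h2' : dC n (Ordinal hp') j = dC n (Ordinal hq') j := h2.
    rewrite !D_pair h1' h2'; split; lia'.
- have [p [hp [h1 h2]]] := @away n n./2 i j ltac:(lia') ltac:(lia') ltac:(lia') ltac:(lia') ltac:(lia').
  have hp' : p < n by apply/ltP.
  exists ((Nat.max a b).+1, i), (Nat.max a b, Ordinal hp'); split.
  + move/(congr1 fst) => /=; lia.
  + have h1' : dC n (Ordinal hp') i = 1 := h1.
    have h2' : dC n (Ordinal hp') j = dC n i j + 1 := h2.
    rewrite !D_pair h1' h2' dC_self; split; lia'.
Qed.

Lemma lb_odd n (hn : 2 < n) (S : seq (nat * 'I_n)) :
  resolving_set (@PinfBoxC n) S -> 2 <= size S.
Proof.
case: S => [|x [|y S]] R //; exfalso.
- apply: (@notres n [::] (0, Ordinal (lt0_3 hn)) (1, Ordinal (lt0_3 hn)) _ _ R) => //.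
- have [u [v [neq H]]] := @noresolve1 n hn x.
  apply: (@notres n [:: x] u v neq _ R) => z; rewrite inE => /eqP ->; exact H.
Qed.

Lemma lb_even n (hn : 2 < n) (hev : ~~ odd n) (S : seq (nat * 'I_n)) :
  resolving_set (@PinfBoxC n) S -> 3 <= size S.
Proof.
case: S => [|x [|y [|z S]]] R //; exfalso.
- apply: (@notres n [::] (0, Ordinal (lt0_3 hn)) (1, Ordinal (lt0_3 hn)) _ _ R) => //.
- have [u [v [neq [H _]]]] := @noresolve2 n hn hev x x.
  apply: (@notres n [:: x] u v neq _ R) => w; rewrite inE => /eqP ->; exact H.
- have [u [v [neq [H1 H2]]]] := @noresolve2 n hn hev x y.
  apply: (@notres n [:: x; y] u v neq _ R) => w; rewrite !inE => /orP [] /eqP ->; done.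
Qed.

Theorem proposition6 (n : nat) (hn : 2 < n) :
  (odd n ->
     metric_dim_eq (@PinfBoxC n) 2 /\
     metric_basis (@PinfBoxC n)
       [:: (0, Ordinal (lt0_3 hn)); (0, Ordinal (lthalfm1_3 hn))]) /\
  (~~ odd n ->
     metric_dim_eq (@PinfBoxC n) 3 /\
     metric_basis (@PinfBoxC n)
       [:: (0, Ordinal (lt0_3 hn)); (0, Ordinal (lthalf_3 hn));
           (0, Ordinal (lt1_3 hn))]).
Proof.
split.
- move=> hodd.
  have B : metric_basis (@PinfBoxC n)
       [:: (0, Ordinal (lt0_3 hn)); (0, Ordinal (lthalfm1_3 hn))].
  { split; [|split; [exact: res_odd|]].
    - have E := odd_double_half n; rewrite hodd /= in E.
      have hm : (n - 1) %/ 2 = n./2.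
        have -> : n - 1 = n./2.*2 by rewrite -addnn in E *; lia'.
        by rewrite divn2 doubleK.
      rewrite /= andbT inE; apply/eqP => /(congr1 (fun z => nat_of_ord z.2)) /=.
      rewrite hm -addnn in E *; lia'.
    - move=> S _ R; exact: lb_odd R. }
  split=> //; by exists [:: (0, Ordinal (lt0_3 hn)); (0, Ordinal (lthalfm1_3 hn))].
- move=> hev.
  have B : metric_basis (@PinfBoxC n)
       [:: (0, Ordinal (lt0_3 hn)); (0, Ordinal (lthalf_3 hn)); (0, Ordinal (lt1_3 hn))].
  { split; [|split; [exact: res_even|]].
    - have E := odd_double_half n; rewrite (negbTE hev) /= -addnn in E.
      rewrite /= !inE andbT; apply/andP; split; [apply/norP; split|];
        apply/eqP => /(congr1 (fun z => nat_of_ord z.2)) /=; rewrite ?divn2; lia'.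
    - move=> S _ R; exact: lb_even R. }
  split=> //; by exists [:: (0, Ordinal (lt0_3 hn)); (0, Ordinal (lthalf_3 hn)); (0, Ordinal (lt1_3 hn))].
Qed.
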